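(* Let $k\ge 2$ be an integer such that the trinomial $T_k(x)=x^k+x+1$ is primitive over $\mathbb{F}_2$, and let $M_k$ be the binary cyclic word defined in the context. Then $\operatorname{cBWT}(M_k)=1\,(0011)^{2^{k-2}-1}\,010$.
   Context: Define $F:\{0,1\}^k\to\{0,1\}^k$ by $F(x_0,\dots,x_{k-1})=(x_1,\dots,x_{k-1},x_0\oplus x_1)$ (the Fibonacci-form linear-feedback shift register of the recurrence $s_{t+k}=s_{t+1}\oplus s_t$ induced by $T_k$). Define $F'$ to agree with $F$ except that $F'(0^k)=0^{k-1}1$ and $F'(10^{k-1})=0^k$ (the successors of the conjugate pair $0^k,10^{k-1}$ are swapped). Since $T_k$ is primitive, $F'$ is a single cycle on all $2^k$ states. Choose any state $x_0$, set $x_{t+1}=F'(x_t)$, and let $w$ be the cyclic binary word of length $2^k$ with $w[t]$ equal to the first coordinate of $x_t$ ($w$ is a binary de Bruijn cycle of order $k$: every word of $\{0,1\}^k$ occurs exactly once as a cyclic window). $M_k$ is the cyclic word obtained from $w$ by reversing it and then complementing every bit ($0\leftrightarrow1$). For a word $u$ of length $n$, $\operatorname{cBWT}(u)$ is the last column of the $n\times n$ matrix whose rows are the $n$ cyclic rotations of $u$ sorted lexicographically (with $0<1$); it depends only on the cycle. *)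

(* Defs.v *)
From mathcomp Require Import all_boot all_algebra.
Set Implicit Arguments. Unset Strict Implicit. Unset Printing Implicit Defensive.
Import GRing.Theory.
Local Open Scope ring_scope.

Definition trinomial (k : nat) : {poly 'F_2} := 'X^k + 'X + 1.

(* A polynomial p of degree k over F_2 is primitive: it is irreducible and
   its root (the class of X in F_2[X]/(p)) has multiplicative order 2^k - 1,
   i.e. X^(2^k-1) = 1 mod p and X^m <> 1 mod p for 0 < m < 2^k - 1. *)
Definition primitive_poly (p : {poly 'F_2}) : Prop :=
  let k := (size p).-1 in
  [/\ irreducible_poly p,
      ('X^(2 ^ k - 1) %% p = 1 %% p) &
      (forall m : nat, (0 < m)%N -> (m < 2 ^ k - 1)%N -> 'X^m %% p != 1 %% p)].

Local Close Scope ring_scope.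

Definition lfsr (x : seq bool) : seq bool :=
  rcons (behead x) (addb (nth false x 0) (nth false x 1)).

Definition lfsr' (k : nat) (x : seq bool) : seq bool :=
  if x == nseq k false then rcons (nseq k.-1 false) true
  else if x == true :: nseq k.-1 false then nseq k false
  else lfsr x.

Definition dbword (k : nat) (x0 : seq bool) : seq bool :=
  [seq nth false (iter t (lfsr' k) x0) 0 | t <- iota 0 (2 ^ k)].

Definition Mk (k : nat) (x0 : seq bool) : seq bool :=
  map negb (rev (dbword k x0)).

Fixpoint lexle (u v : seq bool) : bool :=
  match u, v with
  | [::], _ => true
  | _ :: _, [::] => false
  | a :: u', b :: v' => if a == b then lexle u' v' else (~~ a) && b
  end.

Definition cBWT (u : seq bool) : seq bool :=
  [seq last false r | r <- sort lexle [seq rot i u | i <- iota 0 (size u)]].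

Definition cbwt_target (k : nat) : seq bool :=
  [:: true] ++ flatten (nseq (2 ^ (k - 2) - 1) [:: false; false; true; true])
  ++ [:: false; true; false].

(* Main.v *)
Require Import Defs.
From mathcomp Require Import all_boot all_algebra.
From mathcomp Require Import zify ring.

Lemma lexle_refl : reflexive lexle.
Proof. by elim=> //= a u IH; rewrite eqxx. Qed.

Lemma lexle_total : total lexle.
Proof.
elim=> [|a u IH] [|b v] //=; case: eqP => [->|ab]; first by rewrite eqxx; exact: IH.
by rewrite eq_sym; case: eqP => // _; case: a b ab => [] [].
Qed.

Lemma lexle_trans : transitive lexle.
Proof.
move=> v u w; elim: u v w => [|a u IH] [|b v] [|c w] //=.
by case: a; case: b; case: c => //=; apply: IH.
Qed.

Lemma lexle_anti : antisymmetric lexle.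
Proof.
elim=> [|a u IH] [|b v] //=; case: a; case: b => //= /andP [] H1 H2; 
 by rewrite (IH v) // H1 H2.
Qed.

Lemma lexle_cat u v s t : size u = size v -> u != v -> lexle u v ->
  lexle (u ++ s) (v ++ t).
Proof.
elim: u v => [|a u IH] [|b v] //= [Hs] Hne; case: (a =P b) Hne => [->|ab] Hne //.
by rewrite eqseq_cons eqxx /= in Hne; apply: IH.
Qed.

Fixpoint W (k : nat) : seq (seq bool) :=
  if k is k'.+1 then map (cons false) (W k') ++ map (cons true) (W k')
  else [:: [::]].

Lemma size_W k : size (W k) = 2 ^ k.
Proof. by elim: k => //= k IH; rewrite size_cat !size_map IH expnS mul2n addnn. Qed.

Lemma W_size k u : u \in W k -> size u = k.
Proof.
elim: k u => [|k IH] u /=; first by rewrite inE => /eqP ->.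
by rewrite mem_cat => /orP [] /mapP [v /IH <- ->].
Qed.

Lemma mem_W u : u \in W (size u).
Proof.
elim: u => [|a u IH] //=; rewrite mem_cat.
by case: a; apply/orP; [right|left]; apply: map_f.
Qed.

Definition ltlex (u v : seq bool) := (u != v) && lexle u v.

Lemma pairwise_W k : pairwise ltlex (W k).
Proof.
elim: k => //= k IH; rewrite pairwise_cat !pairwise_map.
have H b : pairwise (relpre (cons b) ltlex) (W k).
  by apply: sub_pairwise IH => u v; case: b; rewrite /= /ltlex eqseq_cons /=.
rewrite !H /= andbT.
rewrite allrel_mapl allrel_mapr.
by apply/allP => u _; apply/allP => v _; rewrite /ltlex /=.
Qed.

Lemma uniq_W k : uniq (W k).
Proof. apply: (pairwise_uniq _ (pairwise_W k)) => u; by rewrite /ltlex eqxx. Qed.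

Definition h0 (u : seq bool) :=
  ~~ (nth false u (size u).-1 (+) nth false u (size u).-2).

Definition hh (u : seq bool) :=
  if u == nseq (size u) true then false
  else if u == rcons (nseq (size u).-1 true) false then true
  else h0 u.

Lemma h0_cons b u : 2 <= size u -> h0 (b :: u) = h0 u.
Proof.
move=> Hu; rewrite /h0 /=.
by case: (size u) Hu => [|[|m]] //= _.
Qed.

Lemma hh_false u : 2 <= size u -> hh (false :: u) = h0 u.
Proof.
move=> Hu; rewrite /hh /= h0_cons //.
by case: (size u) Hu => [|m] //= _.
Qed.

Lemma hh_true u : 2 <= size u -> hh (true :: u) = hh u.
Proof.
move=> Hu; rewrite /hh /= h0_cons // !eqseq_cons /=.
by case: (size u) Hu => [|m] //= _; rewrite eqseq_cons.
Qed.

Definition P := [:: true; false; false; true].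
Definition Q := [:: false; false; true; true].

Lemma map_h0_W k : map h0 (W k.+2) = flatten (nseq (2 ^ k) P).
Proof.
elim: k => [|k IH]; first by [].
rewrite [W _]/= map_cat -!map_comp.
have E b : {in W k.+2, h0 \o cons b =1 h0}.
  by move=> u /W_size Hu /=; rewrite h0_cons // Hu.
rewrite ((eq_in_map _ _ _).1 (E false)) ((eq_in_map _ _ _).1 (E true)) IH.
by rewrite expnS mul2n -addnn nseqD flatten_cat.
Qed.

Lemma PQ m : flatten (nseq m P) ++ [:: true] = true :: flatten (nseq m Q).
Proof. by elim: m => //= m IH; rewrite IH. Qed.

Lemma map_hh_W k : map hh (W k.+2) = cbwt_target k.+2.
Proof.
elim: k => [|k IH]; first by [].
rewrite [W _]/= map_cat -!map_comp.
have E1 : {in W k.+2, hh \o cons false =1 h0}.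
  by move=> u /W_size Hu /=; rewrite hh_false // Hu.
have E2 : {in W k.+2, hh \o cons true =1 hh}.
  by move=> u /W_size Hu /=; rewrite hh_true // Hu.
rewrite ((eq_in_map _ _ _).1 E1) ((eq_in_map _ _ _).1 E2) IH map_h0_W /cbwt_target.
have -> : k.+3 - 2 = k.+1 by lia.
have -> : k.+2 - 2 = k by lia.
have Hp : 0 < 2 ^ k by rewrite expn_gt0.
have -> : 2 ^ k.+1 - 1 = 2 ^ k + (2 ^ k - 1) by rewrite expnS; lia.
rewrite nseqD flatten_cat /= -!catA -cat1s catA PQ.
by [].
Qed.


Section Algebra.
Import GRing.Theory.
Local Open Scope ring_scope.

Lemma F2_cases (c : 'F_2) : c = 0%R \/ c = 1%R.
Proof. by case: c => [[|[|m]]] //= Hm; [left|right]; apply/val_inj. Qed.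

Lemma F2_b (b : bool) : ((b%:R : 'F_2) == 1%R) = b.
Proof. by case: b. Qed.

Lemma F2_add (c d : 'F_2) : ((c + d) == 1%R) = (c == 1%R) (+) (d == 1%R).
Proof. by case: (F2_cases c) => ->; case: (F2_cases d) => ->. Qed.

Lemma F2_opp (c : 'F_2) : (- c = c)%R.
Proof. by case: (F2_cases c) => ->; rewrite ?oppr0 //; apply/val_inj. Qed.

Definition Lf k (x : seq bool) (q : {poly 'F_2}) : 'F_2 :=
  \sum_(i < k) (q %% trinomial k)`_i * (nth false x i)%:R.

Lemma LD k x p q : Lf k x (p + q) = Lf k x p + Lf k x q.
Proof. by rewrite /Lf -big_split /=; apply: eq_bigr => i _; rewrite modpD coefD mulrDl. Qed.

Lemma LZ k x c p : Lf k x (c *: p) = c * Lf k x p.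
Proof. by rewrite /Lf mulr_sumr; apply: eq_bigr => i _; rewrite modpZl coefZ mulrA. Qed.

Lemma L0 k x : Lf k x 0 = 0.
Proof. by rewrite /Lf big1 // => i _; rewrite mod0p coef0 mul0r. Qed.

Lemma LN k x p : Lf k x (- p) = Lf k x p.
Proof. by rewrite -scaleN1r LZ mulN1r F2_opp. Qed.

Lemma Lsum k x (I : Type) (r : seq I) (F : I -> {poly 'F_2}) :
  Lf k x (\sum_(i <- r) F i) = \sum_(i <- r) Lf k x (F i).
Proof. exact: (big_morph _ (LD k x) (L0 k x)). Qed.

Lemma Lmod k x p : Lf k x (p %% trinomial k) = Lf k x p.
Proof. by rewrite /Lf modp_id. Qed.

Lemma Lmulf k x p : Lf k x (p * trinomial k) = 0.
Proof. by rewrite /Lf big1 // => i _; rewrite modp_mull coef0 mul0r. Qed.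

Lemma size_tri k : (2 <= k)%N -> size (trinomial k) = k.+1.
Proof.
move=> Hk.
have H1 : size ('X^k + 'X : {poly 'F_2}) = k.+1.
  by rewrite size_polyDl size_polyXn // size_polyX ltnS.
by rewrite /trinomial size_polyDl ?H1 ?size_poly1 // ltnW.
Qed.

Lemma tri_neq0 k : (2 <= k)%N -> trinomial k != 0.
Proof. by move=> Hk; rewrite -size_poly_eq0 size_tri. Qed.

Lemma LX k x i : (2 <= k)%N -> (i < k)%N -> Lf k x 'X^i = (nth false x i)%:R.
Proof.
move=> Hk Hi; rewrite /Lf modp_small ?size_tri ?size_polyXn //.
rewrite (bigD1 (Ordinal Hi)) //= coefXn eqxx mul1r big1 ?addr0 // => j Hj.
rewrite coefXn; suff -> : (nat_of_ord j == i) = false by rewrite mul0r.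
by apply/negbTE; apply: contra Hj => /eqP Hji; apply/eqP/val_inj.
Qed.

Lemma Lrec k x m : Lf k x 'X^(addn m k) = Lf k x 'X^m + Lf k x 'X^(m.+1).
Proof.
have -> : ('X^(addn m k) : {poly 'F_2}) = 'X^m * trinomial k + (- 'X^(m.+1) + - 'X^m).
  by rewrite /trinomial exprD exprS; ring.
by rewrite LD Lmulf add0r LD !LN addrC.
Qed.

Lemma size_lfsr x : (0 < size x)%N -> size (lfsr x) = size x.
Proof. by rewrite /lfsr size_rcons size_behead; case: (size x). Qed.

Lemma nth_lfsr x i : (2 <= size x)%N -> nth false (lfsr x) i =
  if (i < (size x).-1)%N then nth false x i.+1
  else if i == (size x).-1 then nth false x 0 (+) nth false x 1 else false.
Proof.
move=> Hs; rewrite /lfsr nth_rcons size_behead nth_behead; do 2 case: ifP => //.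
Qed.

Lemma iterL k x m : (2 <= k)%N -> size x = k ->
  size (iter m lfsr x) = k /\
  forall i, (i < k)%N -> nth false (iter m lfsr x) i = (Lf k x 'X^(addn m i) == 1).
Proof.
move=> Hk Hx; elim: m => [|m [IHs IHn]].
  by split=> // i Hi; rewrite add0n LX // F2_b.
rewrite iterS; split; first by rewrite size_lfsr IHs //; lia.
move=> i Hi; rewrite nth_lfsr IHs; last by lia.
case: ltnP => H1.
  by rewrite IHn; [congr (Lf _ _ 'X^_ == 1); lia | lia].
have -> : i = k.-1 by lia.
rewrite eqxx !IHn; try lia.
rewrite -F2_add addn0 addn1 -Lrec; congr (Lf _ _ 'X^_ == 1); lia.
Qed.

Lemma prim_unfold k : (2 <= k)%N -> primitive_poly (trinomial k) ->
  [/\ irreducible_poly (trinomial k),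
      ('X^(2 ^ k - 1) %% trinomial k = 1 %% trinomial k) &
      (forall m : nat, (0 < m)%N -> (m < 2 ^ k - 1)%N ->
          'X^m %% trinomial k != 1 %% trinomial k)].
Proof. by move=> Hk; rewrite /primitive_poly size_tri. Qed.

Lemma lfsr_period k x : (2 <= k)%N -> primitive_poly (trinomial k) -> size x = k ->
  iter (2 ^ k - 1) lfsr x = x.
Proof.
move=> Hk /(prim_unfold _ Hk) [_ Hper _] Hx.
have [Hs Hn] := iterL _ _ (2 ^ k - 1) Hk Hx.
have [_ H0] := iterL _ _ 0 Hk Hx.
apply: (@eq_from_nth _ false); first by rewrite Hs Hx.
move=> i; rewrite Hs => Hi; rewrite Hn // H0 //; congr (_ == 1).
rewrite -Lmod exprD mulrC -modp_mul Hper modp_mul mulr1 Lmod //.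
Qed.

Lemma lfsr_aperiodic k x d : (2 <= k)%N -> primitive_poly (trinomial k) ->
  size x = k -> (0 < d)%N -> (d < 2 ^ k - 1)%N -> iter d lfsr x = x ->
  x = nseq k false.
Proof.
move=> Hk /(prim_unfold _ Hk) [Hirr _ Hmin] Hx Hd0 HdN Hit.
have [Hs Hn] := iterL _ _ d Hk Hx.
have [_ H0] := iterL _ _ 0 Hk Hx.
have Eq i : (i < k)%N -> Lf k x 'X^(addn d i) = Lf k x 'X^i.
  move=> Hi; have := Hn i Hi; rewrite Hit H0 // add0n.
  by case: (F2_cases (Lf k x 'X^(addn d i))) => ->;
     case: (F2_cases (Lf k x 'X^i)) => -> //; rewrite ?oner_eq0 ?eqxx.
set D : {poly 'F_2} := 'X^d - 1.
have HD q : Lf k x (D * q) = 0.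
  rewrite -Lmod -modp_mul Lmod.
  set r := q %% trinomial k.
  have Hr : (size r <= k)%N.
    by have := ltn_modp q (trinomial k); rewrite tri_neq0 // size_tri.
  have -> : r = \sum_(i < k) r`_i *: 'X^i.
    rewrite -poly_def; apply/polyP => j; rewrite coef_poly.
    by case: ltnP => // Hj; rewrite nth_default //; apply: leq_trans Hj.
  rewrite mulr_sumr Lsum big1 // => i _.
  rewrite -scalerAr LZ /D mulrBl mul1r -exprD LD LN Eq //.
  by rewrite -[X in _ + X]LN -LD subrr L0 mulr0.
case Hdv: (trinomial k %| D).
  have := Hmin d Hd0 HdN; have -> : ('X^d : {poly 'F_2}) = D + 1 by rewrite /D subrK.
  by rewrite modpD (modp_eq0 Hdv) add0r eqxx.
have /Bezout_eq1_coprimepP [[u v] /= Huv] : coprimep (trinomial k) D.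
  by rewrite irreducible_poly_coprime // Hdv.
apply: (@eq_from_nth _ false); first by rewrite size_nseq.
move=> i; rewrite Hx => Hi; rewrite nth_nseq Hi.
have := H0 i Hi; rewrite add0n => ->.
have -> : ('X^i : {poly 'F_2}) = ('X^i * u) * trinomial k + D * (v * 'X^i).
  by rewrite -[LHS]mulr1 -Huv; ring.
by rewrite LD Lmulf HD addr0 eq_sym oner_eq0.
Qed.

End Algebra.

Lemma cover_lemma k (s : seq (seq bool)) : uniq s -> size s = 2 ^ k ->
  (forall u, u \in s -> size u = k) -> forall u, size u = k -> u \in s.
Proof.
move=> Us Hs Hall u Hu.
have Hsub : {subset s <= W k} by move=> v Hv; rewrite -(Hall v Hv) mem_W.
have Hle : size (W k) <= size s by rewrite size_W Hs.
have [_ E] := uniq_min_size Us Hsub Hle.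
by rewrite E -Hu mem_W.
Qed.

Lemma size_iter_lfsr k x m : (0 < k) -> size x = k -> size (iter m lfsr x) = k.
Proof. by move=> Hk Hx; elim: m => //= m IH; rewrite size_lfsr IH. Qed.

Lemma lfsr_inj k x x' : 2 <= k -> primitive_poly (trinomial k) -> size x = k -> size x' = k ->
  lfsr x = lfsr x' -> x = x'.
Proof.
move=> Hk Hp Hx Hx' E.
rewrite -(lfsr_period _ _ Hk Hp Hx) -(lfsr_period _ _ Hk Hp Hx').
have -> : 2 ^ k - 1 = (2 ^ k - 2).+1.
  have : 2 ^ 2 <= 2 ^ k by rewrite leq_exp2l.
  rewrite expnS expn1; lia.
by rewrite !iterSr E.
Qed.

Definition zst k := rcons (nseq k.-1 false) true.
Definition est k := true :: nseq k.-1 false.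

Lemma lfsr_e k : 2 <= k -> lfsr (est k) = zst k.
Proof.
move=> Hk; rewrite /lfsr /est /zst /=; congr rcons.
by case: k Hk => [|[|k]].
Qed.

Lemma lfsr_O k : 0 < k -> lfsr (nseq k false) = nseq k false.
Proof.
case: k => //= k _; rewrite /lfsr /=.
have -> : nth false (nseq k false) 0 = false by rewrite nth_nseq; case: ifP.
by rewrite -cats1 -[[:: false]]/(nseq 1 false) -nseqD addn1.
Qed.

Lemma lfsr_nonO k x : 2 <= k -> primitive_poly (trinomial k) -> size x = k ->
  x != nseq k false -> lfsr x != nseq k false.
Proof.
move=> Hk Hp Hx; apply: contra => /eqP E; apply/eqP.
by apply: (@lfsr_inj k x (nseq k false) Hk Hp Hx); rewrite ?size_nseq // lfsr_O // ltnW.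
Qed.

Definition cst k i := iter i lfsr (zst k).

Lemma size_zst k : 0 < k -> size (zst k) = k.
Proof. by rewrite /zst size_rcons size_nseq; case: k. Qed.

Lemma size_est k : 0 < k -> size (est k) = k.
Proof. by rewrite /est /= size_nseq; case: k. Qed.

Lemma size_cst k i : 0 < k -> size (cst k i) = k.
Proof. by move=> Hk; rewrite /cst (size_iter_lfsr _ _ _ Hk) // size_zst. Qed.

Lemma zst_nonO k : 0 < k -> zst k != nseq k false.
Proof.
move=> Hk; apply/negP => /eqP E.
have := congr1 (fun s => nth false s k.-1) E.
by rewrite /zst nth_rcons size_nseq ltnn eqxx nth_nseq; case: ifP.
Qed.

Lemma est_nonO k : 0 < k -> est k != nseq k false.
Proof. by case: k. Qed.

Lemma cst_nonO k i : 2 <= k -> primitive_poly (trinomial k) -> cst k i != nseq k false.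
Proof.
move=> Hk Hp; elim: i => [|i IH]; first by apply: zst_nonO; lia.
by rewrite /cst iterS; apply: lfsr_nonO => //; apply: size_cst; lia.
Qed.

Lemma two_pow k : 2 <= k -> 4 <= 2 ^ k.
Proof. by move=> Hk; rewrite -[4]/(2 ^ 2) leq_exp2l. Qed.

Lemma cst_period k : 2 <= k -> primitive_poly (trinomial k) -> cst k (2 ^ k - 1) = zst k.
Proof. by move=> Hk Hp; rewrite /cst lfsr_period // size_zst //; lia. Qed.

Lemma cst_distinct k i j : 2 <= k -> primitive_poly (trinomial k) ->
  i < j -> j < 2 ^ k - 1 -> cst k i != cst k j.
Proof.
move=> Hk Hp Hij HjN; apply/negP => /eqP E.
have E2 : iter (j - i) lfsr (cst k i) = cst k i.
  by rewrite {2}E /cst -iterD subnK // ltnW.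
have H := @lfsr_aperiodic k (cst k i) (j - i) Hk Hp (size_cst k i (ltnW Hk)) _ _ E2.
by move: (cst_nonO k i Hk Hp); rewrite H ?eqxx //; lia.
Qed.

Lemma cst_last k : 2 <= k -> primitive_poly (trinomial k) -> cst k (2 ^ k - 2) = est k.
Proof.
move=> Hk Hp; have H4 := two_pow _ Hk.
apply: (@lfsr_inj k _ _ Hk Hp (size_cst _ _ (ltnW Hk)) (size_est _ (ltnW Hk))).
rewrite lfsr_e // -(cst_period _ Hk Hp) /cst.
have -> : 2 ^ k - 1 = (2 ^ k - 2).+1 by lia.
by [].
Qed.

Lemma lfsr'_O k : 0 < k -> lfsr' k (nseq k false) = zst k.
Proof. by move=> Hk; rewrite /lfsr' eqxx. Qed.

Lemma lfsr'_e k : 0 < k -> lfsr' k (est k) = nseq k false.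
Proof. by move=> Hk; rewrite /lfsr' (negbTE (est_nonO _ Hk)) /est eqxx. Qed.

Lemma lfsr'_cst k i : 2 <= k -> primitive_poly (trinomial k) -> i < 2 ^ k - 2 ->
  lfsr' k (cst k i) = cst k i.+1.
Proof.
move=> Hk Hp Hi; rewrite /lfsr' (negbTE (cst_nonO k i Hk Hp)).
have -> : (cst k i == true :: nseq k.-1 false) = false.
  by apply/negbTE; rewrite -/(est k) -(cst_last _ Hk Hp) cst_distinct //; lia.
by [].
Qed.

Definition dst k j := iter j (lfsr' k) (nseq k false).

Lemma dst_cst k j : 2 <= k -> primitive_poly (trinomial k) -> 0 < j -> j < 2 ^ k ->
  dst k j = cst k j.-1.
Proof.
move=> Hk Hp; elim: j => [|j IH] // _ Hj.
case: j IH Hj => [|j] IH Hj; first by rewrite /dst /= lfsr'_O //; lia.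
rewrite /dst iterS -/(dst k j.+1) IH //; try lia.
by rewrite lfsr'_cst //; lia.
Qed.

Lemma dst_period k : 2 <= k -> primitive_poly (trinomial k) -> dst k (2 ^ k) = nseq k false.
Proof.
move=> Hk Hp; have H4 := two_pow _ Hk.
have -> : 2 ^ k = (2 ^ k - 1).+1 by lia.
rewrite /dst iterS -/(dst k _) dst_cst //; try lia.
have -> : (2 ^ k - 1).-1 = 2 ^ k - 2 by lia.
by rewrite cst_last // lfsr'_e //; lia.
Qed.

Lemma dst_distinct k i j : 2 <= k -> primitive_poly (trinomial k) ->
  i < j -> j < 2 ^ k -> dst k i != dst k j.
Proof.
move=> Hk Hp Hij Hj.
rewrite (dst_cst _ _ Hk Hp _ Hj); last by lia.
case: i Hij => [|i] Hij.
  by rewrite /dst /= eq_sym cst_nonO.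
rewrite dst_cst //; try lia.
by apply: cst_distinct => //; lia.
Qed.

Lemma size_lfsr' k x : 0 < k -> size x = k -> size (lfsr' k x) = k.
Proof.
move=> Hk Hx; rewrite /lfsr'; case: ifP => _; first by rewrite size_zst.
case: ifP => _; first by rewrite size_nseq.
by rewrite size_lfsr Hx.
Qed.

Lemma size_iter' k x m : 0 < k -> size x = k -> size (iter m (lfsr' k) x) = k.
Proof. by move=> Hk Hx; elim: m => //= m IH; rewrite size_lfsr'. Qed.

Lemma size_dst k j : 0 < k -> size (dst k j) = k.
Proof. by move=> Hk; rewrite /dst size_iter' ?size_nseq. Qed.

Lemma orbit_cover k s : 2 <= k -> primitive_poly (trinomial k) -> size s = k ->
  exists2 j, j < 2 ^ k & s = dst k j.
Proof.
move=> Hk Hp Hs.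
have U : uniq [seq dst k j | j <- iota 0 (2 ^ k)].
  rewrite map_inj_in_uniq ?iota_uniq // => i j; rewrite !mem_iota !add0n => Hi Hj E.
  apply/eqP; case: (ltngtP i j) => // H.
    by move: (dst_distinct k i j Hk Hp H Hj); rewrite E eqxx.
  by move: (dst_distinct k j i Hk Hp H Hi); rewrite E eqxx.
have Hsz : size [seq dst k j | j <- iota 0 (2 ^ k)] = 2 ^ k by rewrite size_map size_iota.
have Hall : forall u, u \in [seq dst k j | j <- iota 0 (2 ^ k)] -> size u = k.
  by move=> u /mapP [j _ ->]; rewrite size_dst //; lia.
have /mapP [j] := cover_lemma k _ U Hsz Hall s Hs.
by rewrite mem_iota add0n => Hj ->; exists j.
Qed.


Lemma Fp_period k s : 2 <= k -> primitive_poly (trinomial k) -> size s = k ->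
  iter (2 ^ k) (lfsr' k) s = s.
Proof.
move=> Hk Hp Hs; have [j Hj ->] := orbit_cover _ _ Hk Hp Hs.
have := dst_period _ Hk Hp; rewrite /dst => E.
by rewrite -iterD addnC iterD E.
Qed.

Lemma Fp_aperiodic k s d : 2 <= k -> primitive_poly (trinomial k) -> size s = k ->
  0 < d -> d < 2 ^ k -> iter d (lfsr' k) s != s.
Proof.
move=> Hk Hp Hs Hd0 Hd; apply/negP => /eqP E.
have [j Hj Es] := orbit_cover _ _ Hk Hp Hs.
have := dst_period _ Hk Hp; rewrite /dst => EP.
have EO : iter (2 ^ k - j) (lfsr' k) s = nseq k false.
  by rewrite Es /dst -iterD (subnK (ltnW Hj)) EP.
have : dst k d = dst k 0.
  by rewrite /dst /= -{1}EO -iterD addnC iterD E.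
by move=> H; move: (dst_distinct k 0 d Hk Hp Hd0 Hd); rewrite H eqxx.
Qed.

Definition nr (u : seq bool) := rev (map negb u).

Lemma nrK : involutive nr.
Proof. by move=> u; rewrite /nr map_rev revK -map_comp (eq_map negbK) map_id. Qed.

Lemma size_nr u : size (nr u) = size u.
Proof. by rewrite /nr size_rev size_map. Qed.

Lemma hh_eq k u : 2 <= k -> size u = k ->
  ~~ nth false (lfsr' k (nr u)) k.-1 = hh u.
Proof.
move=> Hk Hu.
have E1 : nseq k false = nr (nseq k true) by rewrite /nr map_nseq rev_nseq.
have E2 : true :: nseq k.-1 false = nr (rcons (nseq k.-1 true) false).
  by rewrite /nr map_rcons rev_rcons map_nseq rev_nseq.
rewrite /lfsr' /hh Hu E1 E2 !(inj_eq (can_inj nrK)).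
case: ifP => _.
  by rewrite /zst nth_rcons size_nseq ltnn eqxx.
case: ifP => _; first by rewrite -E1 nth_nseq; case: ifP.
rewrite (nth_lfsr (nr u) k.-1) size_nr Hu ?ltnn ?eqxx //.
rewrite /nr !nth_rev ?size_map Hu; try lia.
rewrite !(nth_map false) ?Hu; try lia.
rewrite /h0 Hu.
have -> : k - 1 = k.-1 by lia.
have -> : k - 2 = k.-2 by lia.
by case: (nth false u k.-1); case: (nth false u k.-2).
Qed.

Lemma nth_lfsr' k x i : 2 <= k -> size x = k -> i < k.-1 ->
  nth false (lfsr' k x) i = nth false x i.+1.
Proof.
move=> Hk Hx Hi; rewrite /lfsr'.
case: ifP => [/eqP ->|_].
  by rewrite /zst nth_rcons size_nseq Hi !nth_nseq Hi; case: ifP.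
case: ifP => [/eqP ->|_].
  by rewrite /= !nth_nseq Hi; case: ifP.
by rewrite (nth_lfsr x i) Hx ?Hi.
Qed.

Definition yy k x0 t := iter t (lfsr' k) x0.

Lemma size_yy k x0 t : 0 < k -> size x0 = k -> size (yy k x0 t) = k.
Proof. by move=> Hk Hx; rewrite /yy size_iter'. Qed.

Lemma yy_shift k x0 t j i : 2 <= k -> size x0 = k -> i + j < k ->
  nth false (yy k x0 (t + j)) i = nth false (yy k x0 t) (i + j).
Proof.
move=> Hk Hx; elim: j i => [|j IH] i Hij; first by rewrite !addn0.
rewrite addnS /yy iterS -/(yy k x0 (t + j)) nth_lfsr' ?size_yy //; try lia.
by rewrite IH; [congr nth; lia | lia].
Qed.

Lemma yy_period k x0 t : 2 <= k -> primitive_poly (trinomial k) -> size x0 = k ->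
  yy k x0 (2 ^ k + t) = yy k x0 t.
Proof.
move=> Hk Hp Hx; rewrite /yy iterD Fp_period //.
by rewrite size_iter' //; lia.
Qed.

Lemma yy_inj k x0 t t' : 2 <= k -> primitive_poly (trinomial k) -> size x0 = k ->
  t < t' -> t' < t + 2 ^ k -> yy k x0 t != yy k x0 t'.
Proof.
move=> Hk Hp Hx H1 H2.
have -> : yy k x0 t' = iter (t' - t) (lfsr' k) (yy k x0 t).
  by rewrite /yy -iterD subnK // ltnW.
rewrite eq_sym; apply: Fp_aperiodic => //; try lia.
by rewrite size_yy //; lia.
Qed.

Definition aa k x0 j := ~~ nth false (yy k x0 (2 * 2 ^ k - 1 - j)) 0.

Lemma size_db k x0 : size (dbword k x0) = 2 ^ k.
Proof. by rewrite /dbword size_map size_iota. Qed.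

Lemma size_M k x0 : size (Mk k x0) = 2 ^ k.
Proof. by rewrite /Mk size_map size_rev size_db. Qed.

Lemma nth_M k x0 j : 2 <= k -> primitive_poly (trinomial k) -> size x0 = k ->
  j < 2 ^ k -> nth false (Mk k x0) j = aa k x0 j.
Proof.
move=> Hk Hp Hx Hj.
rewrite /Mk (nth_map false) ?size_rev ?size_db // nth_rev ?size_db //.
rewrite /dbword (nth_map 0) ?size_iota; last by lia.
rewrite nth_iota; last by lia.
rewrite /aa add0n -/(yy k x0 _).
have -> : 2 * 2 ^ k - 1 - j = 2 ^ k + (2 ^ k - j.+1) by lia.
by rewrite yy_period.
Qed.

Lemma aa_period k x0 j : 2 <= k -> primitive_poly (trinomial k) -> size x0 = k ->
  j < 2 ^ k -> aa k x0 (j + 2 ^ k) = aa k x0 j.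
Proof.
move=> Hk Hp Hx Hj; rewrite /aa.
have -> : 2 * 2 ^ k - 1 - j = 2 ^ k + (2 * 2 ^ k - 1 - (j + 2 ^ k)) by lia.
by rewrite yy_period.
Qed.

Lemma nth_rotM k x0 p i : 2 <= k -> primitive_poly (trinomial k) -> size x0 = k ->
  p < 2 ^ k -> i < 2 ^ k -> nth false (rot p (Mk k x0)) i = aa k x0 (p + i).
Proof.
move=> Hk Hp Hx Hpn Hi.
rewrite /rot nth_cat size_drop size_M.
case: ltnP => H.
  by rewrite nth_drop nth_M //; lia.
rewrite nth_take; last by lia.
rewrite nth_M //; last by lia.
rewrite -aa_period //; last by lia.
by congr aa; lia.
Qed.

Definition VV k x0 p := yy k x0 (2 * 2 ^ k - p - k).

Lemma k_lt_n k : k < 2 ^ k.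
Proof. exact: ltn_expl. Qed.

Lemma window k x0 p : 2 <= k -> primitive_poly (trinomial k) -> size x0 = k ->
  p < 2 ^ k -> take k (rot p (Mk k x0)) = nr (VV k x0 p).
Proof.
move=> Hk Hp Hx Hpn; have Hkn := k_lt_n k.
apply: (@eq_from_nth _ false).
  by rewrite size_take size_rot size_M Hkn size_nr size_yy //; lia.
move=> i; rewrite size_take size_rot size_M Hkn => Hi.
rewrite nth_take // nth_rotM //; last by lia.
rewrite /nr nth_rev size_map size_yy //; try lia.
rewrite (nth_map false) ?size_yy //; try lia.
rewrite /VV -[k - i.+1]add0n -yy_shift //; try lia.
rewrite /aa; congr (~~ nth _ (yy _ _ _) _). revert Hpn Hkn; generalize (2 ^ k) => n Hpn Hkn; lia.
Qed.

Lemma lastM k x0 p : 2 <= k -> primitive_poly (trinomial k) -> size x0 = k ->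
  p < 2 ^ k -> last false (rot p (Mk k x0)) = ~~ nth false (lfsr' k (VV k x0 p)) k.-1.
Proof.
move=> Hk Hp Hx Hpn; have Hkn := k_lt_n k.
rewrite -nth_last size_rot size_M nth_rotM //; last by lia.
have -> : lfsr' k (VV k x0 p) = yy k x0 ((2 * 2 ^ k - p - k) + 1).
  by rewrite addn1 /VV /yy iterS.
rewrite -[k.-1]add0n -yy_shift //; try lia.
rewrite /aa.
have -> : 2 * 2 ^ k - p - k + 1 + k.-1 = 2 ^ k + (2 * 2 ^ k - 1 - (p + (2 ^ k).-1)).
  by revert Hpn Hkn; generalize (2 ^ k) => n Hpn Hkn; lia.
by rewrite yy_period.
Qed.

Lemma VV_cover k x0 u : 2 <= k -> primitive_poly (trinomial k) -> size x0 = k ->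
  size u = k -> exists2 p, p < 2 ^ k & VV k x0 p = nr u.
Proof.
move=> Hk Hp Hx Hu.
have Hkn := k_lt_n k.
have U : uniq [seq VV k x0 p | p <- iota 0 (2 ^ k)].
  rewrite map_inj_in_uniq ?iota_uniq // => i j; rewrite !mem_iota !add0n => Hi Hj E.
  apply/eqP; case: (ltngtP i j) => // H.
    move: (@yy_inj k x0 (2 * 2 ^ k - j - k) (2 * 2 ^ k - i - k) Hk Hp Hx).
    rewrite /VV in E; rewrite E eqxx => /(_ _ _)/negP; case => //;
      revert Hi Hj Hkn H; generalize (2 ^ k) => n Hi Hj Hkn H; lia.
  move: (@yy_inj k x0 (2 * 2 ^ k - i - k) (2 * 2 ^ k - j - k) Hk Hp Hx).
  rewrite /VV in E; rewrite E eqxx => /(_ _ _)/negP; case => //;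
    revert Hi Hj Hkn H; generalize (2 ^ k) => n Hi Hj Hkn H; lia.
have Hsz : size [seq VV k x0 p | p <- iota 0 (2 ^ k)] = 2 ^ k by rewrite size_map size_iota.
have Hall : forall v, v \in [seq VV k x0 p | p <- iota 0 (2 ^ k)] -> size v = k.
  by move=> v /mapP [j _ ->]; rewrite /VV size_yy //; lia.
have /mapP [p] := cover_lemma k _ U Hsz Hall (nr u) (etrans (size_nr u) Hu).
by rewrite mem_iota add0n => Hpn E; exists p.
Qed.

Definition Wl k x0 := [seq take k (rot p (Mk k x0)) | p <- iota 0 (2 ^ k)].
Definition pos k x0 u := index u (Wl k x0).

Lemma pos_spec k x0 u : 2 <= k -> primitive_poly (trinomial k) -> size x0 = k ->
  size u = k -> pos k x0 u < 2 ^ k /\ take k (rot (pos k x0 u) (Mk k x0)) = u.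
Proof.
move=> Hk Hp Hx Hu.
have [p Hpn E] := VV_cover _ _ _ Hk Hp Hx Hu.
have Hin : u \in Wl k x0.
  apply/mapP; exists p; first by rewrite mem_iota add0n.
  by rewrite window // E nrK.
have Hlt : pos k x0 u < 2 ^ k.
  by move: Hin; rewrite -index_mem /Wl size_map size_iota.
split => //.
have := nth_index [::] Hin; rewrite -/(pos k x0 u) /Wl (nth_map 0) ?size_iota //.
by rewrite nth_iota // add0n.
Qed.

Theorem theorem2 (k : nat) (x0 : seq bool) :
  2 <= k -> primitive_poly (trinomial k) -> size x0 = k ->
  cBWT (Mk k x0) = cbwt_target k.
Proof.
move=> Hk Hp Hx.
set M := Mk k x0.
set L := [seq rot (pos k x0 u) M | u <- W k].
have Hperm : perm_eq L [seq rot i M | i <- iota 0 (size M)].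
  rewrite /L size_M (map_comp (rot^~ M) (pos k x0)) /=.
  apply: perm_map.
  have Uq : uniq [seq pos k x0 u | u <- W k].
    rewrite map_inj_in_uniq ?uniq_W // => u v /W_size Hu /W_size Hv E.
    by rewrite -(proj2 (pos_spec _ _ _ Hk Hp Hx Hu)) E (proj2 (pos_spec _ _ _ Hk Hp Hx Hv)).
  apply: uniq_perm; rewrite ?iota_uniq //.
  have Hsub : {subset [seq pos k x0 u | u <- W k] <= iota 0 (2 ^ k)}.
    move=> j /mapP [u /W_size Hu ->]; rewrite mem_iota add0n.
    exact: (proj1 (pos_spec _ _ _ Hk Hp Hx Hu)).
  have Hle : size (iota 0 (2 ^ k)) <= size [seq pos k x0 u | u <- W k].
    by rewrite size_map size_iota size_W.
  by have [_ E] := uniq_min_size Uq Hsub Hle.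
have Hsorted : sorted lexle L.
  apply: pairwise_sorted; rewrite /L pairwise_map.
  apply: (@sub_in_pairwise _ (mem (W k)) ltlex); last exact: pairwise_W.
    move=> u v /W_size Hu /W_size Hv /andP [Hne Hle] /=.
    have [_ Eu] := pos_spec _ _ _ Hk Hp Hx Hu.
    have [_ Ev] := pos_spec _ _ _ Hk Hp Hx Hv.
    rewrite -(cat_take_drop k (rot (pos k x0 u) M)) -(cat_take_drop k (rot (pos k x0 v) M)).
    by rewrite /M Eu Ev; apply: lexle_cat => //; rewrite Hu Hv.
  by apply/allP.
rewrite /cBWT -/M.
rewrite -(perm_sortP lexle_total lexle_trans lexle_anti _ _ Hperm).
rewrite (sorted_sort lexle_trans Hsorted) /L -map_comp.
have -> : [seq (last false \o (rot^~ M \o pos k x0)) i | i <- W k] = [seq hh u | u <- W k].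
  apply/eq_in_map => u /W_size Hu /=.
  have [Hlt Eu] := pos_spec _ _ _ Hk Hp Hx Hu.
  rewrite /M lastM //.
  have -> : VV k x0 (pos k x0 u) = nr u.
    apply: (can_inj nrK); rewrite nrK -(window _ _ _ Hk Hp Hx Hlt); exact: Eu.
  exact: (hh_eq k u Hk Hu).
by case: k Hk {Hp Hx M L Hperm Hsorted} => [|[|k]] // _; rewrite map_hh_W.
Qed.
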